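(* Let $d\ge 2$ and let $\{(G_\nu,S_\nu,|\cdot|_\nu)\}_{\nu\in\mathbb{N}}$ be a non-$\ell_1$-expanding similar family of groups of automorphisms of $T_d$. Then for every $\nu\in\mathbb{N}$, $\kappa_\nu\le\kappa_{\nu+1}$.
   Context: $T_d$ is the $d$-regular rooted tree; $\mathrm{Sym}(d)$ acts by rooted automorphisms, and every $g\in\mathrm{Aut}(T_d)$ is uniquely $g=(g_1,\dots,g_d)\tau$ with $\tau\in\mathrm{Sym}(d)$ and $g_i$ the restriction of $g\tau^{-1}$ to the subtree at the $i$-th child of the root. A pseudolength on a finite symmetric generating set $S$ of $G$ is a map $S\to\{0,1\}$; the word pseudonorm is $|g|=\min\{\sum_i|s_i| : g=s_1\cdots s_k,\ s_i\in S\}$; it is proper if the subgroup generated by the length-$0$ generators is finite. A non-$\ell_1$-expanding similar family is a family $\{(G_\nu,S_\nu,|\cdot|_\nu)\}_{\nu\in\mathbb{N}}$ where each $G_\nu\le\mathrm{Aut}(T_d)$ acts transitively on each level, is generated by the finite symmetric set $S_\nu$ and carries a proper word pseudonorm $|\cdot|_\nu$, such that every $g\in G_\nu$ is $g=(g_1,\dots,g_d)\tau$ with $g_i\in G_{\nu+1}$, $\tau\in\mathrm{Sym}(d)$ and $\sum_{i=1}^d|g_i|_{\nu+1}\le|g|_\nu$. $\gamma_\nu(n)=|\{g\in G_\nu : |g|_\nu\le n\}|$ and $\kappa_\nu=\lim_{n\to\infty}\gamma_\nu(n)^{1/n}$ is the exponential growth rate (this limit exists). *)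

(* Defs.v *)
From Stdlib Require Import Reals ClassicalEpsilon.
From Stdlib Require List.
From Coquelicot Require Import Coquelicot.
From mathcomp Require Import all_boot.

Set Implicit Arguments.
Unset Strict Implicit.
Unset Printing Implicit Defensive.

(* Vertices of the d-regular rooted tree T_d: finite words over {0,..,d-1};
   the root is [::], the children of w are rcons w i. *)
Definition vertex (d : nat) := seq 'I_d.
Definition tmap (d : nat) := vertex d -> vertex d.

Definition is_aut (d : nat) (f : tmap d) : Prop :=
  bijective f /\ f [::] = [::] /\
  (forall (w : vertex d) (i : 'I_d), exists j : 'I_d, f (rcons w i) = rcons (f w) j).

(* Section of g at the first-level vertex i (restriction of g to the subtree
   at i, identified with T_d). *)
Definition section (d : nat) (g : tmap d) (i : 'I_d) : tmap d :=
  fun w => behead (g (i :: w)).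

Definition wprod (d : nat) (ws : seq (tmap d)) : tmap d :=
  foldr (fun (s acc : tmap d) => fun w => s (acc w)) (fun w => w) ws.

Definition generated (d : nat) (S : tmap d -> Prop) (g : tmap d) : Prop :=
  exists ws : seq (tmap d), (forall s, List.In s ws -> S s) /\ wprod ws = g.

Definition finite_set (T : Type) (P : T -> Prop) : Prop :=
  exists l : seq T, forall x, P x -> List.In x l.

Definition symmetric_set (d : nat) (S : tmap d -> Prop) : Prop :=
  forall s, S s -> exists t, S t /\ (fun w => t (s w)) = (fun w => w) /\ (fun w => s (t w)) = (fun w => w).

Definition wcost (d : nat) (L : tmap d -> bool) (ws : seq (tmap d)) : nat :=
  sumn (map (fun s => nat_of_bool (L s)) ws).

Definition wnorm (d : nat) (S : tmap d -> Prop) (L : tmap d -> bool) (g : tmap d) : nat :=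
  epsilon (inhabits O) (fun n : nat =>
    (exists ws, (forall s, List.In s ws -> S s) /\ wprod ws = g /\ wcost L ws = n) /\
    (forall ws, (forall s, List.In s ws -> S s) -> wprod ws = g -> leq n (wcost L ws))).

Definition proper_pseudonorm (d : nat) (S : tmap d -> Prop) (L : tmap d -> bool) : Prop :=
  finite_set (generated (fun s => S s /\ L s = false)).

Definition level_transitive (d : nat) (S : tmap d -> Prop) : Prop :=
  forall u v : vertex d, size u = size v -> exists g, generated S g /\ g u = v.

Definition fincard (T : Type) (P : T -> Prop) : nat :=
  epsilon (inhabits O) (fun m : nat =>
    exists l : seq T, List.NoDup l /\ (forall x, P x <-> List.In x l) /\ size l = m).

Definition gamma (d : nat) (S : tmap d -> Prop) (L : tmap d -> bool) (n : nat) : nat :=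
  fincard (fun g => generated S g /\ leq (wnorm S L g) n).

Definition kappa (d : nat) (S : tmap d -> Prop) (L : tmap d -> bool) : Rbar :=
  Lim_seq (fun n : nat => Rpower (INR (gamma S L n)) (/ INR n)).

Definition non_l1_expanding_similar_family (d : nat)
    (S : nat -> tmap d -> Prop) (L : nat -> tmap d -> bool) : Prop :=
  (forall nu,
     finite_set (S nu) /\ symmetric_set (S nu) /\ (forall s, S nu s -> is_aut s) /\
     proper_pseudonorm (S nu) (L nu) /\ level_transitive (S nu)) /\
  (forall nu g, generated (S nu) g ->
     (forall i : 'I_d, generated (S nu.+1) (section g i)) /\
     leq (\sum_(i < d) wnorm (S nu.+1) (L nu.+1) (section g i)) (wnorm (S nu) (L nu) g)).

(* Main.v *)
Require Import Defs.
From Stdlib Require Import ClassicalEpsilon Classical FunctionalExtensionality List.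
From Stdlib Require Import Reals Lra Lia Psatz.
From Coquelicot Require Import Coquelicot.
From mathcomp Require Import all_boot zify.
Set Implicit Arguments.
Unset Strict Implicit.
Unset Printing Implicit Defensive.
Delimit Scope nat_scope with N.
Open Scope nat_scope.

Lemma size_length T (l : seq T) : size l = length l.
Proof. by elim: l => //= x l ->. Qed.

Lemma size_lmap A B (f : A -> B) l : size (List.map f l) = size l.
Proof. by elim: l => //= x l ->. Qed.

Lemma flat_map_size A B (f : A -> seq B) l n :
  (forall x, List.In x l -> size (f x) <= n) -> size (List.flat_map f l) <= size l * n.
Proof.
elim: l => //= x l IH H.
rewrite size_cat mulSn leq_add //; first by apply: H; left.
by apply: IH => y Hy; apply: H; right.
Qed.

Lemma memIn (T : eqType) (x : T) s : x \in s -> List.In x s.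
Proof. elim: s => //= y s IH; rewrite in_cons => /orP [/eqP ->|/IH]; auto. Qed.

Lemma exact_enum T (P : T -> Prop) l : (forall x, P x -> List.In x l) ->
  exists l', List.NoDup l' /\ forall x, P x <-> List.In x l'.
Proof.
elim: l P => [|a l IH] P HP.
  exists nil; split; first constructor. by move=> x; split=> [/HP|[]].
have [l' [Hn He]] : exists l', List.NoDup l' /\ forall x, (P x /\ x <> a) <-> List.In x l'.
  apply: (IH (fun x => P x /\ x <> a)) => x [Px xa]; case: (HP x Px) => // e; by case: xa; rewrite e.
case: (classic (P a)) => Pa.
- exists (a :: l'); split.
    constructor => // /He [] _; by [].
  move=> x; split.
    move=> Px; case: (classic (x = a)) => [->|xa]; [by left | right; apply/He; by split].
  by case=> [<-|Hx] //; case/He: Hx.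
- exists l'; split => // x; split.
    move=> Px; apply/He; split => // xa; apply: Pa; by rewrite -xa.
  by case/He.
Qed.

Lemma fincard_spec T (P : T -> Prop) l0 : (forall x, P x -> List.In x l0) ->
  exists l, List.NoDup l /\ (forall x, P x <-> List.In x l) /\ size l = fincard P.
Proof.
move=> H; have [l [Hn He]] := exact_enum H.
rewrite /fincard.
set Q := fun m : nat => _.
have : Q (epsilon (inhabits O) Q).
  apply: epsilon_spec; exists (size l); by exists l.
case=> l' [? [? ?]]; by exists l'.
Qed.

Lemma fincard_le T (P : T -> Prop) l0 : (forall x, P x -> List.In x l0) ->
  fincard P <= size l0.
Proof.
move=> H; have [l [Hn [He <-]]] := fincard_spec H.
rewrite !size_length; apply/leP; apply: NoDup_incl_length => // x /He; exact: H.
Qed.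

Lemma fincard_ge1 T (P : T -> Prop) l0 x0 : (forall x, P x -> List.In x l0) -> P x0 ->
  0 < fincard P.
Proof.
move=> H Px; have [l [Hn [He <-]]] := fincard_spec H.
move/He: Px; by case: l {Hn He}.
Qed.

Lemma nat_min (P : nat -> Prop) : (exists n, P n) -> exists n, P n /\ forall m, P m -> n <= m.
Proof.
move=> [n Pn]; apply: NNPP => H.
have : forall k m, m <= k -> ~ P m.
  elim=> [|k IH] m.
    rewrite leqn0 => /eqP -> P0; apply: H; exists 0; by split.
  rewrite leq_eqVlt => /orP [/eqP ->|]; last by apply: IH.
  move=> Pm; apply: H; exists k.+1; split => // m' Pm'.
  rewrite leqNgt; apply/negP => lt; exact: (IH m' lt Pm').
by move/(_ n n (leqnn n)).
Qed.

Section W.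
Variable d : nat.
Implicit Types (S : tmap d -> Prop) (L : tmap d -> bool) (ws : seq (tmap d)).

Definition inS S ws := forall s, List.In s ws -> S s.

Lemma inS_cat S ws1 ws2 : inS S (ws1 ++ ws2) -> inS S ws1 /\ inS S ws2.
Proof. move=> H; split=> s Hs; apply: H; apply: in_or_app; auto. Qed.

Lemma wprod_cat ws1 ws2 : wprod (ws1 ++ ws2) = fun w => wprod ws1 (wprod ws2 w).
Proof. elim: ws1 => //= s ws1 ->. by []. Qed.

Lemma wcost_cat L ws1 ws2 : wcost L (ws1 ++ ws2) = wcost L ws1 + wcost L ws2.
Proof. by rewrite /wcost map_cat sumn_cat. Qed.

Lemma wnorm_spec S L g : generated S g ->
  (exists ws, inS S ws /\ wprod ws = g /\ wcost L ws = wnorm S L g) /\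
  (forall ws, inS S ws -> wprod ws = g -> wnorm S L g <= wcost L ws).
Proof.
move=> [ws0 [H0 E0]].
have [n [[ws [Hs [Ew Ec]]] Hmin]] :
  exists n, (exists ws, inS S ws /\ wprod ws = g /\ wcost L ws = n) /\
    forall m, (exists ws, inS S ws /\ wprod ws = g /\ wcost L ws = m) -> n <= m.
  apply: nat_min; by exists (wcost L ws0), ws0.
rewrite /wnorm.
set P := fun n : nat => _.
have : P (epsilon (inhabits O) P).
  apply: epsilon_spec; exists n; split; first by exists ws.
  move=> ws' H1 H2; apply: Hmin; by exists ws'.
by case.
Qed.

Lemma wnorm_le S L ws : inS S ws -> wnorm S L (wprod ws) <= wcost L ws.
Proof.
move=> H; have [_ H2] := @wnorm_spec S L (wprod ws) (ex_intro _ ws (conj H erefl)).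
exact: H2.
Qed.

Lemma wnorm_id S L : wnorm S L (fun w => w) = 0.
Proof.
have : wnorm S L (wprod [::]) <= wcost L [::] by apply: wnorm_le.
by rewrite leqn0 => /eqP.
Qed.

Lemma generated_id S : generated S (fun w => w).
Proof. by exists [::]. Qed.

Lemma wcost_split L ws t : t <= wcost L ws ->
  exists ws1 ws2, ws = ws1 ++ ws2 /\ wcost L ws1 = t.
Proof.
elim: ws t => [|s ws IH] t.
  move=> H; have -> : t = 0 by apply/eqP; rewrite -leqn0. by exists [::], [::].
case: t => [|t]; first by move=> _; exists [::], (s :: ws).
have Ec : forall l, wcost L (s :: l) = L s + wcost L l by [].
rewrite Ec; case Ls: (L s) => /= H.
- have [ws1 [ws2 [E C]]] := IH t H.
  exists (s :: ws1), ws2; split; first by rewrite E.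
  by rewrite Ec C Ls.
- have [ws1 [ws2 [E C]]] := IH t.+1 H.
  exists (s :: ws1), ws2; split; first by rewrite E.
  by rewrite Ec C Ls.
Qed.

Fixpoint Clist (lH lS : seq (tmap d)) (c : nat) : seq (tmap d) :=
  match c with
  | O => lH
  | c'.+1 => List.flat_map (fun h => List.flat_map (fun s =>
               List.map (fun x => fun w => h (s (x w))) (Clist lH lS c')) lS) lH
  end.

Lemma Clist_in S L lH lS :
  (forall h, generated (fun s => S s /\ L s = false) h -> List.In h lH) ->
  (forall s, S s -> List.In s lS) ->
  forall ws, inS S ws -> forall h, generated (fun s => S s /\ L s = false) h ->
  List.In (fun w => h (wprod ws w)) (Clist lH lS (wcost L ws)).
Proof.
move=> HH HS; elim=> [|s ws IH] Hws h Hh.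
  by apply: HH.
have Ss : S s by apply: Hws; left.
have Hws' : inS S ws by move=> x Hx; apply: Hws; right.
rewrite /wcost /=; case E: (L s) => /=.
- apply/in_flat_map; exists h; split; first exact: HH.
  apply/in_flat_map; exists s; split; first exact: HS.
  apply/in_map_iff; exists (wprod ws); split => //.
  exact: (IH Hws' (fun w => w) (generated_id _)).
- have Hh' : generated (fun s => S s /\ L s = false) (fun w => h (s w)).
    case: Hh => hs [Hhs Eh]; exists (hs ++ [:: s]); split.
      move=> x Hx0; case: (in_app_or _ _ _ Hx0) => [Hx|[Hx|[]]]; [exact: Hhs | by rewrite -Hx; split].
    by rewrite wprod_cat Eh.
  exact: (IH Hws' _ Hh').
Qed.

Lemma ball_cover S L : finite_set S -> proper_pseudonorm S L -> forall n,
  exists l, forall g, generated S g /\ wnorm S L g <= n -> List.In g l.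
Proof.
move=> [lS HS] [lH HH] n.
exists (List.flat_map (Clist lH lS) (seq.iota 0 n.+1)) => g [Hg Hn].
have [[ws [Hws [Eg Ec]]] _] := wnorm_spec L Hg.
apply/in_flat_map; exists (wcost L ws); split.
  apply: memIn; rewrite mem_iota /= add0n ltnS Ec //.
have := Clist_in HH HS Hws (generated_id _).
by rewrite -Eg.
Qed.

Fixpoint Pw (l : seq (tmap d)) (j : nat) : seq (tmap d) :=
  match j with
  | O => l
  | j'.+1 => List.flat_map (fun a => List.map (fun x => fun w => a (x w)) (Pw l j')) l
  end.

Lemma Pw_size l j : size (Pw l j) <= size l ^ j.+1.
Proof.
elim: j => [|j IH] /=; first by rewrite expn1.
rewrite expnS; apply: flat_map_size => a _; by rewrite size_lmap.
Qed.

Lemma Pw_in S L k E : (forall g, generated S g /\ wnorm S L g <= k -> List.In g E) ->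
  forall j g, generated S g -> wnorm S L g <= j.+1 * k -> List.In g (Pw E j).
Proof.
move=> HE; elim=> [|j IH] g Hg Hn /=.
  apply: HE; split => //; by rewrite mul1n in Hn.
have [[ws [Hws [Eg Ec]]] _] := wnorm_spec L Hg.
have [ws1 [ws2 [Ew C]]] := @wcost_split L ws (minn k (wcost L ws)) (geq_minr _ _).
rewrite Ew in Hws Eg Ec; have [H1 H2] := inS_cat Hws.
apply/in_flat_map; exists (wprod ws1); split.
  apply: HE; split; first by exists ws1.
  apply: leq_trans (wnorm_le L H1) _; rewrite C; exact: geq_minl.
apply/in_map_iff; exists (wprod ws2); split; first by rewrite -Eg wprod_cat.
apply: IH; first by exists ws2.
apply: leq_trans (wnorm_le L H2) _.
have Ec' : wcost L ws = wcost L ws1 + wcost L ws2 by rewrite Ew wcost_cat.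
rewrite wcost_cat in Ec.
move: Hn; rewrite mulSn -Ec.
move: C Ec'; set m := j.+1 * k; set c := wcost L ws; set c1 := wcost L ws1; set c2 := wcost L ws2.
move=> C Ec' Hn; lia.
Qed.
End W.

Fixpoint prodl T (ls : seq (seq T)) : seq (seq T) :=
  if ls is l :: ls' then List.flat_map (fun x => List.map (cons x) (prodl ls')) l else [:: [::]].

Lemma prodl_in T (xs : seq T) ls : List.Forall2 (fun x l => List.In x l) xs ls -> List.In xs (prodl ls).
Proof.
elim=> [|x l xs' ls' Hx _ IH] /=; first by left.
apply/in_flat_map; exists x; split => //; apply/in_map_iff; by exists xs'.
Qed.

Lemma prodl_size_mem T (xs : seq T) ls : List.In xs (prodl ls) -> size xs = size ls.
Proof.
elim: ls xs => [|l ls IH] xs /=; first by case=> [<-|[]].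
move/in_flat_map=> [x [_ /in_map_iff [ys [<- Hy]]]] /=; by rewrite (IH _ Hy).
Qed.

Lemma prodl_size T (ls : seq (seq T)) : size (prodl ls) <= foldr (fun l acc => size l * acc) 1 ls.
Proof.
elim: ls => [|l ls IH] //=.
apply: leq_trans (flat_map_size (n := size (prodl ls)) _) _.
  by move=> x _; rewrite size_lmap.
by rewrite leq_mul2l IH orbT.
Qed.

Lemma foldr_nseq T (l : seq T) k : foldr (fun l acc => size l * acc) 1 (nseq k l) = size l ^ k.
Proof. elim: k => [|k IH] //=; by rewrite IH expnS. Qed.

Lemma F2_nseq (I T : Type) (js : seq I) (F : I -> T) L :
  (forall i, List.In (F i) L) -> List.Forall2 (fun x l => List.In x l) (map F js) (nseq (size js) L).
Proof. move=> H; elim: js => [|i js IH] /=; constructor => //. Qed.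

Lemma F2_map (I T : Type) (js : seq I) (F : I -> T) E :
  (forall i, List.In (F i) (E i)) -> List.Forall2 (fun x l => List.In x l) (map F js) (map E js).
Proof. move=> H; elim: js => [|i js IH] /=; constructor => //. Qed.

Section A.
Variable d : nat.

Definition autp (f : tmap d) := f [::] = [::] /\ forall w i, exists j, f (rcons w i) = rcons (f w) j.

Lemma aut_autp f : is_aut f -> autp f.
Proof. by case=> _ []. Qed.

Lemma wprod_autp (ws : seq (tmap d)) : (forall s, List.In s ws -> autp s) -> autp (wprod ws).
Proof.
elim: ws => [|s ws IH] H /=.
  split => // w i; by exists i.
have [h1 h2] := H s (or_introl erefl).
have [h3 h4] := IH (fun x Hx => H x (or_intror Hx)).
split; first by rewrite h3 h1.
move=> w i; have [j Ej] := h4 w i; rewrite Ej; exact: h2.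
Qed.

Lemma autp_cat f : autp f -> forall u v, exists s, f (u ++ v) = f u ++ s.
Proof.
move=> [_ Hf] u v; elim/last_ind: v => [|v i [s Es]].
  by exists [::]; rewrite !cats0.
have [j Ej] := Hf (u ++ v) i.
exists (rcons s j); by rewrite -rcons_cat Ej Es rcons_cat.
Qed.

Lemma aut_decomp f : autp f -> forall (i : 'I_d) w, f (i :: w) = head i (f [:: i]) :: section f i w.
Proof.
move=> Hf i w; have [s Es] := autp_cat Hf [:: i] w.
have [j Ej] := Hf.2 [::] i; rewrite /= in Ej.
rewrite /section Es Ej Hf.1 /=; by [].
Qed.

Definition rebuild (tau : seq 'I_d) (hs : seq (tmap d)) : tmap d :=
  fun w => if w is i :: w' then nth i tau i :: nth (fun x => x) hs i w' else [::].

Lemma rebuild_eq f : autp f ->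
  f = rebuild (map (fun i => head i (f [:: i])) (enum 'I_d)) (map (section f) (enum 'I_d)).
Proof.
move=> Hf; apply: functional_extensionality => w; case: w => [|i w]; first exact: Hf.1.
rewrite (aut_decomp Hf) /rebuild.
have Sz : i < size (enum 'I_d) by rewrite size_enum_ord ltn_ord.
rewrite (nth_map i _ _ Sz) (nth_map i _ _ Sz).
by rewrite -?enumT !nth_ord_enum.
Qed.

Lemma sum_enum (F : 'I_d -> nat) : sumn (map F (enum 'I_d)) = \sum_(i < d) F i.
Proof. by rewrite sumnE big_map big_enum. Qed.

Lemma level_count (S S' : tmap d -> Prop) (L L' : tmap d -> bool) (E : nat -> seq (tmap d)) (Hk : nat) k n :
  0 < k -> 0 < Hk ->
  (forall s, S s -> is_aut s) ->
  (forall g, generated S g -> (forall i, generated S' (section g i)) /\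
       \sum_(i < d) wnorm S' L' (section g i) <= wnorm S L g) ->
  (forall m g, generated S' g /\ wnorm S' L' g <= m -> List.In g (E m)) ->
  (forall m, size (E m) <= Hk ^ (m %/ k).+1) ->
  exists l, (forall g, generated S g /\ wnorm S L g <= n -> List.In g l) /\
            size l <= d ^ d * n.+1 ^ d * Hk ^ (n %/ k + d).
Proof.
move=> k0 Hk0 Haut Hsec HE HEs.
set TAUS := prodl (nseq d (enum 'I_d)).
set MV := prodl (nseq d (seq.iota 0 n.+1)).
exists (List.flat_map (fun tau => List.flat_map (fun mv =>
   if sumn mv <= n then List.map (rebuild tau) (prodl (map E mv)) else [::]) MV) TAUS).
split.
- move=> g [Hg Hn].
  have Hf : autp g.
    case: Hg => ws [Hws <-]; apply: wprod_autp => s Hs; apply: aut_autp; exact: Haut (Hws s Hs).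
  have [Hsg Hsum] := Hsec g Hg.
  apply/in_flat_map; exists (map (fun i => head i (g [:: i])) (enum 'I_d)); split.
    have HF := @F2_nseq _ _ (enum 'I_d) (fun i => head i (g [:: i])) (enum 'I_d)
                 (fun i => memIn (mem_enum _ _)).
    rewrite size_enum_ord in HF; exact: prodl_in HF.
  apply/in_flat_map; exists (map (fun i => wnorm S' L' (section g i)) (enum 'I_d)); split.
    have HF : List.Forall2 (fun x l => List.In x l) (map (fun i => wnorm S' L' (section g i)) (enum 'I_d)) (nseq (size (enum 'I_d)) (seq.iota 0 n.+1)).
      apply: F2_nseq => i.
      apply: memIn; rewrite mem_iota /= add0n ltnS.
      apply: leq_trans Hn; apply: leq_trans Hsum.
      rewrite (bigD1 i) //=; exact: leq_addr.
    rewrite size_enum_ord in HF; exact: prodl_in HF.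
  rewrite sum_enum (leq_trans Hsum Hn).
  apply/in_map_iff; exists (map (section g) (enum 'I_d)); split; first by rewrite -rebuild_eq.
  apply: prodl_in; rewrite -map_comp; apply: F2_map => i /=.
  apply: HE; split => //.
- apply: leq_trans (flat_map_size (n := n.+1 ^ d * Hk ^ (n %/ k + d)) _) _; last first.
    rewrite -mulnA leq_mul2r; apply/orP; right.
    have := prodl_size (nseq d (enum 'I_d)); by rewrite foldr_nseq size_enum_ord.
  move=> tau _.
  apply: leq_trans (flat_map_size (n := Hk ^ (n %/ k + d)) _) _; last first.
    rewrite leq_mul2r; apply/orP; right.
    have := prodl_size (nseq d (seq.iota 0 n.+1)); by rewrite foldr_nseq size_iota.
  move=> mv Hmv.
  have Hsz : size mv = d by rewrite (prodl_size_mem Hmv) size_nseq.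
  case: ifP => Hs; last by [].
  rewrite size_lmap; apply: leq_trans (prodl_size _) _.
  have H1 : foldr (fun l acc => size l * acc) 1 (map E mv) <= Hk ^ (sumn (map (fun m => m %/ k) mv) + size mv).
    elim: (mv) => [|m s IH] //=.
    rewrite -addnA addnS addnS -addSn expnD; apply: leq_mul => //.
  apply: leq_trans H1 _; rewrite Hsz leq_pexp2l // leq_add2r.
  rewrite leq_divRL //; apply: leq_trans Hs.
  elim: (mv) => [|m s IH] //=; rewrite mulnDl leq_add //; exact: leq_divM.
Qed.
End A.

Section An.
Local Open Scope R_scope.

Lemma exp_le_mono x y : x <= y -> exp x <= exp y.
Proof. move=> H; case: (Rle_lt_or_eq_dec _ _ H) => [/exp_increasing|->]; lra. Qed.

Lemma ln_ge0 x : 1 <= x -> 0 <= ln x.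
Proof. move=> H; rewrite -ln_1; apply: ln_le; lra. Qed.

Lemma INR_ge1 {n : nat} : (1 <= n)%N -> 1 <= INR n.
Proof. move=> H; apply: (le_INR 1); apply/leP. exact H. Qed.

Lemma INR_expn (m p : nat) : INR (m ^ p)%N = INR m ^ p.
Proof. elim: p => [|p IH]; first by rewrite expn0. by rewrite expnS mulnE mult_INR IH. Qed.

Lemma INR_muln (m p : nat) : INR (m * p)%N = INR m * INR p.
Proof. by rewrite mulnE mult_INR. Qed.

Lemma INR_addn (m p : nat) : INR (m + p)%N = INR m + INR p.
Proof. by rewrite addnE plus_INR. Qed.

Lemma Lim_le_LimSup u : Rbar_le (Lim_seq u) (LimSup_seq u).
Proof.
rewrite /Lim_seq; have := LimSup_LimInf_seq_le u.
case: (LimSup_seq u) => [s| |]; case: (LimInf_seq u) => [i| |] //= H; lra.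
Qed.

Lemma LimInf_le_Lim u : Rbar_le (LimInf_seq u) (Lim_seq u).
Proof.
rewrite /Lim_seq; have := LimSup_LimInf_seq_le u.
case: (LimSup_seq u) => [s| |]; case: (LimInf_seq u) => [i| |] //= H; lra.
Qed.

Lemma analytic (G H : nat -> nat) (K D : nat) :
  (1 <= K)%N ->
  (forall n, 1 <= G n)%N -> (forall n, 1 <= H n)%N ->
  (forall k n, 0 < k -> G n <= K * (n.+1)^D * H k ^ (n %/ k + D))%N ->
  Rbar_le (Lim_seq (fun n => Rpower (INR (G n)) (/ INR n)))
          (Lim_seq (fun n => Rpower (INR (H n)) (/ INR n))).
Proof.
move=> HK HG HH Hb.
set a := fun n => _.
set b := fun n => _.
have key : forall k, (0 < k)%N -> Rbar_le (LimSup_seq a) (b k).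
  move=> k k0.
  set l := ln (INR (H k)).
  set A := ln (INR K) + INR D * l.
  set c := fun n : nat => exp (A * / INR n + 2 * INR D * (ln (INR n.+1) / INR n.+1) + / INR k * l).
  have lim_c : is_lim_seq c (b k).
    rewrite /b /Rpower.
    have -> : / INR k * ln (INR (H k)) = A * 0 + 2 * INR D * 0 + / INR k * l by rewrite /l; ring.
    apply: (is_lim_seq_continuous exp (fun n => A * / INR n + 2 * INR D * (ln (INR n.+1) / INR n.+1) + / INR k * l)).
      exact: derivable_continuous_pt (derivable_pt_exp _).
    apply: is_lim_seq_plus'; last exact: is_lim_seq_const.
    apply: is_lim_seq_plus'.
      apply: is_lim_seq_mult'; first exact: is_lim_seq_const.
      have -> : Rbar.Finite 0 = Rbar_inv p_infty by [].
      apply: is_lim_seq_inv; [exact: is_lim_seq_INR | by []].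
    apply: is_lim_seq_mult'; first exact: is_lim_seq_const.
    apply: (is_lim_comp_seq (fun y => ln y / y) (fun n => INR n.+1) p_infty 0).
    - exact: is_lim_div_ln_p.
    - by exists O => n _.
    - by apply/(is_lim_seq_incr_1 INR); exact: is_lim_seq_INR.
  rewrite -(is_LimSup_seq_unique _ _ (is_lim_LimSup_seq _ _ lim_c)).
  apply: LimSup_le.
  exists 1%nat => n Hn.
  have n1 : (1 <= n)%N by apply/leP.
  rewrite /a /c /Rpower; apply: exp_le_mono.
  have Hx : 1 <= INR n by exact: INR_ge1.
  have Hl : 0 <= l by apply: ln_ge0; apply: INR_ge1.
  have HlK : 0 <= ln (INR K) by apply: ln_ge0; apply: INR_ge1.
  have Hy : 0 <= ln (INR n.+1) by apply: ln_ge0; apply: INR_ge1.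
  have Hk1 : 1 <= INR k by apply: INR_ge1.
  have Hq : INR (n %/ k) * INR k <= INR n.
    rewrite -INR_muln; apply: le_INR; apply/leP; exact: leq_divM.
  have HlG : ln (INR (G n)) <= ln (INR K) + INR D * ln (INR n.+1) + (INR (n %/ k) + INR D) * l.
    have pos : forall m : nat, (1 <= m)%N -> 0 < INR m.
      move=> m m1; have := INR_ge1 m1; lra.
    have hpos : 0 < INR (G n) by apply: pos.
    apply: Rle_trans (ln_le _ _ hpos (le_INR _ _ (leP (Hb k n k0)))) _.
    - rewrite !INR_muln !INR_expn ln_mult; last first.
      + apply: pow_lt; exact: pos.
      + apply: Rmult_lt_0_compat; [exact: pos|]; apply: pow_lt; exact: pos.
      rewrite ln_mult; [|exact: pos|apply: pow_lt; exact: pos].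
      rewrite !ln_pow; [|exact: pos|exact: pos].
      rewrite INR_addn /l; lra.
  rewrite S_INR in Hy HlG *.
  set x := INR n in Hx Hq HlG *.
  set y := ln (x + 1) in Hy HlG *.
  set q := INR (n %/ k) in Hq HlG.
  set z := ln (INR (G n)) in HlG *.
  set kk := INR k in Hk1 Hq *.
  have Hq' : q <= x * / kk.
    apply: (Rmult_le_reg_r kk); first lra.
    rewrite Rmult_assoc Rinv_l; lra.
  have hix : x * / x = 1 by field; lra.
  have hix0 : 0 < / x by apply: Rinv_0_lt_compat; lra.
  have hiy : (x + 1) * / (x + 1) = 1 by field; lra.
  have hiy0 : 0 < / (x + 1) by apply: Rinv_0_lt_compat; lra.
  have hik : kk * / kk = 1 by field; lra.
  have hik0 : 0 < / kk by apply: Rinv_0_lt_compat; lra.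
  have HD : 0 <= INR D by apply: pos_INR.
  have h1 : / x <= 2 * / (x + 1).
    apply: (Rmult_le_reg_r (x * (x + 1))); first nra.
    have -> : / x * (x * (x + 1)) = x + 1 by field; lra.
    have -> : 2 * / (x + 1) * (x * (x + 1)) = 2 * x by field; lra.
    lra.
  rewrite /A /Rdiv.
  have h2 : / x * z <= / x * (ln (INR K) + INR D * y + (x * / kk + INR D) * l).
    apply: Rmult_le_compat_l; first lra.
    apply: Rle_trans HlG _; nra.
  apply: Rle_trans h2 _.
  have -> : / x * (ln (INR K) + INR D * y + (x * / kk + INR D) * l)
          = (ln (INR K) + INR D * l) * / x + INR D * (y * / x) + (x * / x) * / kk * l by ring.
  rewrite hix.
  have : y * / x <= 2 * (y * / (x + 1)) by nra.
  nra.
have b_ge : forall n, (0 < n)%N -> exists r, LimSup_seq a = Rbar.Finite r /\ r <= b n \/ LimSup_seq a = m_infty.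
  move=> n n0; have := key n n0.
  case: (LimSup_seq a) => [r| |] //= h; [by exists r; left|by exists 0; right].
have [r [[Er _]|Em]] := b_ge 1%nat isT.
- apply: Rbar_le_trans (Lim_le_LimSup a) _; rewrite Er.
  apply: Rbar_le_trans (LimInf_le_Lim b).
  rewrite -(LimInf_seq_const r); apply: LimInf_le.
  exists 1%nat => n Hn; have := key n (introT leP Hn); by rewrite Er.
- apply: Rbar_le_trans (Lim_le_LimSup a) _; rewrite Em; by case: (Lim_seq b).
Qed.
End An.

Theorem mainTheorem5 (d : nat) (S : nat -> tmap d -> Prop) (L : nat -> tmap d -> bool) :
  leq 2 d ->
  non_l1_expanding_similar_family S L ->
  forall nu : nat, Rbar_le (kappa (S nu) (L nu)) (kappa (S nu.+1) (L nu.+1)).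
Proof.
move=> Hd [Hlev Hfam] nu.
have [Fin0 [_ [Aut0 [Pr0 _]]]] := Hlev nu.
have [Fin1 [_ [_ [Pr1 _]]]] := Hlev nu.+1.
have cov0 := ball_cover Fin0 Pr0.
have cov1 := ball_cover Fin1 Pr1.
have ge1 : forall (S' : tmap d -> Prop) L' (n : nat),
    (exists l, forall g, generated S' g /\ leq (wnorm S' L' g) n -> List.In g l) ->
    leq 1 (gamma S' L' n).
  move=> S' L' n [l Hl]; apply: (fincard_ge1 (l0 := l) (x0 := fun w => w)) => //.
  split; first exact: generated_id. by rewrite wnorm_id.
have Espec : forall m, exists l, List.NoDup l /\
    (forall x, (generated (S nu.+1) x /\ leq (wnorm (S nu.+1) (L nu.+1) x) m) <-> List.In x l) /\
    size l = gamma (S nu.+1) (L nu.+1) m.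
  move=> m; have [l0 Hl0] := cov1 m; exact: fincard_spec Hl0.
pose E := fun m => proj1_sig (constructive_indefinite_description _ (Espec m)).
have HE : forall m, List.NoDup (E m) /\
    (forall x, (generated (S nu.+1) x /\ leq (wnorm (S nu.+1) (L nu.+1) x) m) <-> List.In x (E m)) /\
    size (E m) = gamma (S nu.+1) (L nu.+1) m.
  move=> m; exact: proj2_sig (constructive_indefinite_description _ (Espec m)).
apply: (@analytic _ _ (expn d d) d).
- by rewrite expn_gt0; apply/orP; left; apply: leq_trans Hd.
- move=> n; apply: ge1; exact: cov0.
- move=> n; apply: ge1; exact: cov1.
- move=> k n k0.
  have Hk0 : leq 1 (gamma (S nu.+1) (L nu.+1) k) by apply: ge1; exact: cov1.
  have HEs : forall m, leq (size (E m)) (expn (gamma (S nu.+1) (L nu.+1) k) (m %/ k).+1).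
    move=> m; rewrite (proj2 (proj2 (HE m))).
    rewrite -(proj2 (proj2 (HE k))).
    apply: leq_trans (Pw_size (E k) (m %/ k)).
    apply: fincard_le => g [Hg Hn].
    apply: (@Pw_in d (S nu.+1) (L nu.+1) k) => //.
      by move=> g' H'; exact: (proj1 (proj1 (proj2 (HE k)) g') H').
    apply: leq_trans Hn _; apply: ltnW; exact: ltn_ceil.
  have [l [Hl Hsz]] := @level_count d (S nu) (S nu.+1) (L nu) (L nu.+1) E
     (gamma (S nu.+1) (L nu.+1) k) k n k0 Hk0 Aut0 (Hfam nu)
     (fun m g H => proj1 ((proj1 (proj2 (HE m))) g) H) HEs.
  apply: leq_trans (fincard_le Hl) Hsz.
Qed.
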